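(* Let $\mathcal{K}$ be an amenable closed convex cone in a finite-dimensional Euclidean space and let $P$ be a polyhedral set. Then $\mathcal{K}\cap P$ is an amenable convex set. In particular, if $\mathcal{K}$ is pointed, then $\mathcal{K}=\operatorname{cone}C$ for some compact amenable convex set $C$ (a slice of $\mathcal{K}$).
   Context: $\operatorname{cone}C=\{\lambda x: x\in C,\lambda\ge0\}$. Pointed means $\mathcal{K}\cap(-\mathcal{K})=\{0\}$. A face of a closed convex set $C$ is a closed convex subset $F\subseteq C$ such that whenever $x,y\in C$ and $\alpha x+(1-\alpha)y\in F$ for some $\alpha\in(0,1)$, then $x,y\in F$. A face $F$ of $C$ is amenable if for every bounded set $B$ there exists $\kappa>0$ such that $\operatorname{dist}(x,F)\le\kappa\operatorname{dist}(x,C)$ for all $x\in(\operatorname{aff}F)\cap B$; $C$ is amenable if all its faces are amenable. *)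

(* Defs.v *)
From HB Require Import structures.
From mathcomp Require Import all_boot all_order all_algebra.
From mathcomp Require Import all_classical all_reals all_analysis.
Set Implicit Arguments.
Unset Strict Implicit.
Unset Printing Implicit Defensive.
Import Order.TTheory GRing.Theory Num.Theory.
Import numFieldNormedType.Exports.
Local Open Scope classical_set_scope.
Local Open Scope ring_scope.

Section Defs.
Variables (R : realType) (n : nat).
Notation V := 'rV[R]_n.

Definition enorm (x : V) : R := Num.sqrt (\sum_(i < n) x ord0 i ^+ 2).

Definition edist (x : V) (C : set V) : R := inf [set enorm (x - y) | y in C].

Definition ebounded (B : set V) : Prop :=
  exists M : R, forall x, B x -> enorm x <= M.

Definition convex_set_of (C : set V) : Prop :=
  forall x y (t : R), C x -> C y -> 0 <= t -> t <= 1 ->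
    C (t *: x + (1 - t) *: y).

Definition aff (F : set V) : set V :=
  [set z | exists (m : nat) (v : 'I_m -> V) (w : 'I_m -> R),
     (forall i, F (v i)) /\ \sum_(i < m) w i = 1 /\
     z = \sum_(i < m) w i *: v i].

Definition is_face (C F : set V) : Prop :=
  closed F /\ convex_set_of F /\ F `<=` C /\
  forall x y (a : R), C x -> C y -> 0 < a -> a < 1 ->
    F (a *: x + (1 - a) *: y) -> F x /\ F y.

Definition amenable_face (C F : set V) : Prop :=
  forall B : set V, ebounded B ->
    exists kappa : R, 0 < kappa /\
      forall x, aff F x -> B x -> edist x F <= kappa * edist x C.

Definition amenable (C : set V) : Prop :=
  forall F, is_face C F -> amenable_face C F.

Definition closed_convex_cone (K : set V) : Prop :=
  closed K /\ convex_set_of K /\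
  forall x (l : R), K x -> 0 <= l -> K (l *: x).

Definition pointed (K : set V) : Prop :=
  K `&` [set x | K (- x)] = [set 0].

Definition polyhedral (P : set V) : Prop :=
  exists (m : nat) (A : 'M[R]_(n, m)) (b : 'rV[R]_m),
    P = [set x | forall i : 'I_m, (x *m A) ord0 i <= b ord0 i].

Definition cone_of (C : set V) : set V :=
  [set z | exists x (l : R), C x /\ 0 <= l /\ z = l *: x].

End Defs.

(* Main.v *)
Require Import Defs.
From HB Require Import structures.
From mathcomp Require Import all_boot all_order all_algebra.
From mathcomp Require Import all_classical all_reals all_analysis.
From mathcomp Require Import ring lra.
Import Order.TTheory GRing.Theory Num.Theory.
Import numFieldNormedType.Exports.
Set Implicit Arguments.
Unset Strict Implicit.
Unset Printing Implicit Defensive.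
Local Open Scope classical_set_scope.
Local Open Scope ring_scope.

Notation edist := Defs.edist.
Ltac vec := apply/rowP => ?; rewrite !mxE; field.


Section Basic.
Variables (R : realType) (n : nat).
Notation V := 'rV[R]_n.

Definition N1 (x : V) : R := \sum_(i < n) `|x ord0 i|.

Lemma N1_ge0 x : 0 <= N1 x.
Proof. by apply: sumr_ge0 => i _. Qed.

Lemma N1D x y : N1 (x + y) <= N1 x + N1 y.
Proof.
rewrite /N1 -big_split /=; apply: ler_sum => i _; rewrite mxE; exact: ler_normD.
Qed.

Lemma N1Z c x : N1 (c *: x) = `|c| * N1 x.
Proof.
rewrite /N1 mulr_sumr; apply: eq_bigr => i _; by rewrite mxE normrM.
Qed.

Lemma N1N x : N1 (- x) = N1 x.
Proof. by rewrite -scaleN1r N1Z normrN normr1 mul1r. Qed.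

Lemma N1B x y : N1 (x - y) = N1 (y - x).
Proof. by rewrite -N1N opprB. Qed.

Lemma N10 : N1 0 = 0.
Proof. by rewrite /N1 big1 // => i _; rewrite mxE normr0. Qed.

Lemma coord_le_enorm (x : V) i : `|x ord0 i| <= enorm x.
Proof.
rewrite /enorm -sqrtr_sqr ler_sqrt; last by apply: sumr_ge0 => j _; exact: sqr_ge0.
by rewrite (bigD1 i) //= lerDl; apply: sumr_ge0 => j _; exact: sqr_ge0.
Qed.

Lemma enorm_le_N1 x : enorm x <= N1 x.
Proof.
rewrite /enorm -(ger0_norm (N1_ge0 x)) -sqrtr_sqr ler_sqrt; last exact: sqr_ge0.
rewrite /N1.
pose K (u v : R) := u <= v ^+ 2 /\ 0 <= v.
suff : K (\sum_(i < n) x ord0 i ^+ 2) (\sum_(i < n) `|x ord0 i|) by case.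
apply: (big_rec2 K); first by split => //; rewrite expr0n.
move=> i u v _ [h1 h2]; split; last by rewrite addr_ge0.
rewrite -[x ord0 i ^+ 2]real_normK ?num_real//.
have := normr_ge0 (x ord0 i); move: (`|x ord0 i|) => a ha; nra.
Qed.

Lemma N1_le_enorm x : N1 x <= n%:R * enorm x.
Proof.
apply: le_trans (ler_sum _ (fun i _ => coord_le_enorm x i)) _.
by rewrite sumr_const card_ord mulr_natl.
Qed.

Lemma enorm_ge0 (x : V) : 0 <= enorm x.
Proof. exact: sqrtr_ge0. Qed.

End Basic.


Section Lin.
Variables (R : realType) (n : nat).
Notation V := 'rV[R]_n.

Definition subsp (T : set V) :=
  T 0 /\ (forall u v, T u -> T v -> T (u + v)) /\
  (forall (c : R) u, T u -> T (c *: u)).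

Lemma subsp_sum (T : set V) k (c : 'I_k -> R) (u : 'I_k -> V) :
  subsp T -> (forall i, T (u i)) -> T (\sum_(i < k) c i *: u i).
Proof.
move=> [T0 [TD TZ]] Tu; apply: (big_ind T) => //.
by move=> i _; apply: TZ.
Qed.

Lemma subsp_submx (T : set V) k (M : 'M[R]_(k, n)) z :
  subsp T -> (forall i, T (row i M)) -> (z <= M)%MS -> T z.
Proof.
move=> sT TM /mulmxKpV <-; rewrite mulmx_sum_row; exact: subsp_sum.
Qed.

Lemma lin_cont (c : 'I_n -> R) :
  continuous (fun v : V => \sum_(i < n) v ord0 i * c i).
Proof.
suff : forall s : seq 'I_n,
    continuous (fun v : V => \sum_(i <- s) v ord0 i * c i) by apply.
elim => [|i s IH].
  have -> : (fun v : V => \sum_(i <- [::]) v ord0 i * c i) = (fun=> 0).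
    by apply/funext => v; rewrite big_nil.
  exact: cst_continuous.
have -> : (fun v : V => \sum_(j <- i :: s) v ord0 j * c j) =
   (fun v : V => v ord0 i * c i) + (fun v : V => \sum_(j <- s) v ord0 j * c j).
  by apply/funext => v; rewrite big_cons.
move=> x; apply: continuousD; last exact: IH.
apply: (@continuousM _ _ (fun v : V => v ord0 i) (fun _ => c i)).
  exact: coord_continuous.
exact: cst_continuous.
Qed.

Lemma span_lemma (S : set V) :
  exists k (M : 'M[R]_(k, n)), (forall i, S (row i M)) /\
     forall z, S z -> (z <= M)%MS.
Proof.
pose P (r : nat) : Prop :=
  exists k (M : 'M[R]_(k, n)), (forall i, S (row i M)) /\ \rank M = r.
pose Pb : pred nat := fun r => `[< P r >].
have P0 : exists r, Pb r.
  exists 0%N; apply/asboolP; exists 0%N, (0 : 'M[R]_(0, n)); split; first by case.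
  by apply/eqP; rewrite -leqn0 rank_leq_row.
have Pub : forall r, Pb r -> (r <= n)%N.
  by move=> r /asboolP [k [M [_ <-]]]; exact: rank_leq_col.
case: (ex_maxnP P0 Pub) => r /asboolP [k [M [SM rM]]] rmax.
exists k, M; split => // z Sz.
apply/negPn/negP => zM.
have : P (\rank (col_mx M z)).
  exists (k + 1)%N, (col_mx M z); split => // i.
  by case: (split_ordP i) => j ->; rewrite ?rowKu ?rowKd // ord1 row_id.
move/asboolP/rmax; rewrite -addsmxE -rM.
suff : (\rank M < \rank (M + z)%MS)%N by rewrite ltnNge => /negbTE ->.
have : (M < M + z)%MS by rewrite ltmxE addsmxSl /= addsmx_sub submx_refl.
by rewrite ltmxErank => /andP [].
Qed.

Lemma subsp_closed (T : set V) : subsp T -> closed T.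
Proof.
move=> sT; have [k [M [TM hM]]] := span_lemma T.
have -> : T = \bigcap_(j in [set: 'I_n])
     ((fun v : V => \sum_(i < n) v ord0 i * cokermx M i j) @^-1` [set x | x = 0]).
  apply/seteqP; split => v /=.
    move=> /hM; rewrite submxE => /eqP e j _.
    by move: (congr1 (fun A : 'rV[R]_n => A ord0 j) e); rewrite !mxE.
  move=> h; have := (@subsp_submx T k M v sT TM); apply; rewrite submxE; apply/eqP/rowP => j.
  by rewrite !mxE (h j I).
apply: closed_bigI => j _; apply: preimage_closed; last exact: closed_eq.
move=> x _; exact: lin_cont.
Qed.

End Lin.



Lemma ge_min_l (R : realType) (a b : R) : Num.min a b <= a.
Proof. by rewrite ge_min lexx. Qed.
Lemma ge_min_r (R : realType) (a b : R) : Num.min a b <= b.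
Proof. by rewrite ge_min lexx orbT. Qed.

Section Tdir.
Variables (R : realType) (n : nat).
Notation V := 'rV[R]_n.

Definition tdir (S : set V) (p : V) : set V :=
  [set v | exists2 e : R, 0 < e & forall s : R, `|s| <= e -> S (p + s *: v)].

Lemma tdir_subsp S p : convex_set_of S -> S p -> subsp (tdir S p).
Proof.
move=> cS Sp; split; first by exists 1 => // s _; rewrite scaler0 addr0.
split.
  move=> u v [e1 e10 h1] [e2 e20 h2].
  exists (Num.min e1 e2 / 2); first by rewrite divr_gt0 // lt_min e10 e20.
  move=> s hs.
  have hs2 : `|2 * s| <= Num.min e1 e2.
    by rewrite normrM ger0_norm // -ler_pdivlMl // mulrC.
  have := cS _ _ (2^-1) (h1 _ (le_trans hs2 (ge_min_l _ _)))
             (h2 _ (le_trans hs2 (ge_min_r _ _))).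
  have -> : p + s *: (u + v) =
    2^-1 *: (p + (2 * s) *: u) + (1 - 2^-1) *: (p + (2 * s) *: v) by vec.
  by apply; rewrite ?invr_ge0 ?invf_le1 ?ler1n.
move=> c u [e e0 h]; exists (e / (`|c| + 1)); first by rewrite divr_gt0 // ltr_wpDl.
move=> s hs; rewrite scalerA; apply: h; rewrite normrM.
rewrite ler_pdivlMr ?ltr_wpDl // in hs.
apply: le_trans (_ : `|s| * (`|c| + 1) <= e) => //.
by rewrite ler_wpM2l // lerDl.
Qed.

Lemma tdir_seg S p z eps : convex_set_of S -> S p -> S z -> 0 < eps ->
  S (p + eps *: (p - z)) -> tdir S p (z - p).
Proof.
move=> cS Sp Sz e0 Sw; exists (Num.min eps 1); first by rewrite lt_min e0 ltr01.
move=> s hs; have [s0|s0] := leP 0 s.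
  have s1 : s <= 1 by rewrite -(ger0_norm s0); exact: le_trans hs (ge_min_r _ _).
  have -> : p + s *: (z - p) = s *: z + (1 - s) *: p by vec.
  exact: cS.
have hs' : - s <= eps by rewrite -(ltr0_norm s0); exact: le_trans hs (ge_min_l _ _).
have -> : p + s *: (z - p) = (- s / eps) *: (p + eps *: (p - z)) + (1 - (- s / eps)) *: p.
  by apply/rowP => ?; rewrite !mxE; field; rewrite gt_eqF.
apply: cS => //; [by apply: divr_ge0; lra | ].
by rewrite ler_pdivrMr // mul1r.
Qed.

Lemma tdir_mono S S' p : S `<=` S' -> tdir S p `<=` tdir S' p.
Proof. by move=> sS v [e e0 h]; exists e => // s /h /sS. Qed.

Lemma tdir_mid S p g : convex_set_of S -> S p -> S g ->
  tdir S p `<=` tdir S (2^-1 *: g + (1 - 2^-1) *: p) /\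
  tdir S (2^-1 *: g + (1 - 2^-1) *: p) (g - p).
Proof.
move=> cS Sp Sg; split.
  move=> v [e e0 h]; exists (e / 2); first by rewrite divr_gt0.
  move=> s hs.
  have hs2 : `|2 * s| <= e by rewrite normrM ger0_norm // -ler_pdivlMl // mulrC.
  have -> : 2^-1 *: g + (1 - 2^-1) *: p + s *: v =
     2^-1 *: g + (1 - 2^-1) *: (p + (2 * s) *: v) by vec.
  apply: cS => //; try lra; exact: h.
exists (2^-1); first by rewrite invr_gt0.
move=> s hs.
have -> : 2^-1 *: g + (1 - 2^-1) *: p + s *: (g - p) =
   (2^-1 + s) *: g + (1 - (2^-1 + s)) *: p by vec.
move: hs; rewrite ler_norml => /andP [h1 h2].
by apply: cS => //; lra.
Qed.

Lemma tdir_pt S p z : tdir S p (z - p) ->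
  exists2 eps, 0 < eps & S (p + eps *: (p - z)).
Proof.
move=> [e e0 h]; exists e => //.
have -> : p + e *: (p - z) = p + (- e) *: (z - p) by vec.
by apply: h; rewrite normrN gtr0_norm.
Qed.

Lemma ri_exists (F : set V) q : convex_set_of F -> F q ->
  exists p, F p /\ forall z, F z -> tdir F p (z - p).
Proof.
move=> cF Fq.
have [k [M [FM hM]]] := span_lemma [set v : V | F (v + q)].
have step : forall l : nat, exists p, [/\ F p, tdir F p (p - q) &
    forall i : 'I_k, (i < l)%N -> tdir F p (row i M)].
  elim=> [|l [p [Fp Tp Ti]]].
    exists q; split => //; first by rewrite subrr; case: (tdir_subsp cF Fq).
  have [lk|kl] := ltnP l k; last first.
    exists p; split => // i il; apply: Ti; exact: leq_trans (ltn_ord i) kl.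
  pose i0 := Ordinal lk; pose g := row i0 M + q.
  have Fg : F g by exact: FM.
  have [T1 T2] := tdir_mid cF Fp Fg.
  set p1 := 2^-1 *: g + (1 - 2^-1) *: p in T1 T2 *.
  have Fp1 : F p1 by apply: cF => //; lra.
  have [s0 [sD sZ]] := tdir_subsp cF Fp1.
  have Tgq : tdir F p1 (g - q).
    have -> : g - q = (g - p) + (p - q) by vec.
    by apply: sD => //; exact: T1.
  exists p1; split => //.
    have -> : p1 - q = 2^-1 *: (g - q) + (1 - 2^-1) *: (p - q) by rewrite /p1; vec.
    by apply: sD; apply: sZ => //; exact: T1.
  move=> i; rewrite ltnS leq_eqVlt => /orP [/eqP il|il]; last exact/T1/Ti.
  have -> : i = i0 by apply: val_inj.
  by have -> : row i0 M = g - q by rewrite /g addrK.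
have [p [Fp Tpq Ti]] := step k.
exists p; split => // z Fz.
have [s0 [sD sZ]] := tdir_subsp cF Fp.
have Tzq : tdir F p (z - q).
  apply: (subsp_submx (tdir_subsp cF Fp) (fun i => Ti i (ltn_ord i))).
  by apply: hM; rewrite /= subrK.
have -> : z - p = (z - q) + (-1) *: (p - q) by vec.
by apply: sD => //; apply: sZ.
Qed.

End Tdir.



Section Faces.
Variables (R : realType) (n : nat).
Notation V := 'rV[R]_n.

Lemma face_push (D F : set V) q z eps : is_face D F -> F q -> D z -> 0 < eps ->
  D (q + eps *: (q - z)) -> F z.
Proof.
move=> [_ [_ [FD hF]]] Fq Dz e0 Dw.
have a0 : 0 < eps / (1 + eps) by rewrite divr_gt0 // ltr_wpDl.
have a1 : eps / (1 + eps) < 1 by rewrite ltr_pdivrMr ?ltr_wpDl // mul1r ltrDr.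
have := hF _ _ _ Dz Dw a0 a1.
have -> : eps / (1 + eps) *: z + (1 - eps / (1 + eps)) *: (q + eps *: (q - z)) = q.
  by apply/rowP => ?; rewrite !mxE; field; rewrite gt_eqF // ltr_wpDl.
by move=> /(_ Fq) [].
Qed.

Lemma aff_nonempty (F : set V) x : aff F x -> exists y, F y.
Proof.
move=> [m [v [w [Fv [sw _]]]]]; case: m v w Fv sw => [|m] v w Fv sw.
  by move: sw; rewrite big_ord0 => /eqP; rewrite eq_sym oner_eq0.
by exists (v ord0).
Qed.

Lemma aff_mono (F G : set V) : F `<=` G -> aff F `<=` aff G.
Proof. by move=> FG x [m [v [w [Fv h]]]]; exists m, v, w; split => // i; apply: FG. Qed.

Lemma aff_self (F : set V) : F `<=` aff F.
Proof.
move=> x Fx; exists 1%N, (fun=> x), (fun=> 1); split => //.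
by rewrite !big_ord1 scale1r.
Qed.

Lemma aff_decomp (F : set V) z p : aff F z ->
  exists m (v : 'I_m -> V) (w : 'I_m -> R), (forall i, F (v i)) /\
    z - p = \sum_(i < m) w i *: (v i - p).
Proof.
move=> [m [v [w [Fv [sw ->]]]]]; exists m, v, w; split => //.
under [RHS]eq_bigr do rewrite scalerBr.
by rewrite sumrB -scaler_suml sw scale1r.
Qed.

Lemma face_aff (D F : set V) z : is_face D F -> D z -> aff F z -> F z.
Proof.
move=> fF Dz aFz; have [_ [cF [FD _]]] := fF.
have [y Fy] := aff_nonempty aFz.
have [p [Fp hp]] := ri_exists cF Fy.
have [m [v [w [Fv E]]]] := aff_decomp p aFz.
have hT : tdir F p (z - p).
  by rewrite E; apply: subsp_sum (tdir_subsp cF Fp) _ => i; exact: hp.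
have [eps e0 Fw] := tdir_pt hT.
exact: (face_push fF Fp Dz e0 (FD _ Fw)).
Qed.


Definition Gf (C : set V) (p : V) : set V := [set z | C z /\ tdir C p (z - p)].

Lemma extr_one (C : set V) p y z a : convex_set_of C -> C p -> C y -> C z ->
  0 < a -> a < 1 -> tdir C p (a *: y + (1 - a) *: z - p) -> tdir C p (y - p).
Proof.
move=> cC Cp Cy Cz a0 a1 [e e0 h].
pose d := Num.min (e / 2) (2^-1).
have d0 : 0 < d by rewrite lt_min divr_gt0 //= invr_gt0.
have d1 : d <= e / 2 by exact: ge_min_l.
have d2 : d <= 2^-1 by exact: ge_min_r.
apply: (@tdir_seg _ _ C p y (d * a)) => //; first by rewrite mulr_gt0.
have -> : p + (d * a) *: (p - y) =
  2^-1 *: (p + (- (2 * d)) *: (a *: y + (1 - a) *: z - p)) +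
  (1 - 2^-1) *: (p + (2 * d * (1 - a)) *: (z - p)) by vec.
apply: (cC); try lra.
  by apply: h; rewrite normrN ger0_norm; [lra|lra].
have -> : p + (2 * d * (1 - a)) *: (z - p) =
  (2 * d * (1 - a)) *: z + (1 - (2 * d * (1 - a))) *: p by vec.
apply: (cC) => //; first by apply: mulr_ge0; lra.
have : 2 * d * (1 - a) <= 2 * d * 1 by apply: ler_wpM2l; lra.
lra.
Qed.

Lemma Gf_face (C : set V) p : closed C -> convex_set_of C -> C p -> is_face C (Gf C p).
Proof.
move=> clC cC Cp; have [s0 [sD sZ]] := tdir_subsp cC Cp.
split.
  have -> : Gf C p = C `&` ((fun z => z - p) @^-1` tdir C p) by [].
  apply: closedI => //; apply: preimage_closed; last exact: subsp_closed (tdir_subsp cC Cp).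
  move=> x _; exact: (cvgB cvg_id (cvg_cst p)).
split.
  move=> x y t [Cx Tx] [Cy Ty] t0 t1; split; first exact: cC.
  have -> : t *: x + (1 - t) *: y - p = t *: (x - p) + (1 - t) *: (y - p) by vec.
  by apply: sD; apply: sZ.
split; first by move=> z [].
move=> y z a Cy Cz a0 a1 [Cw Tw]; split; split => //.
  exact: extr_one Cy Cz a0 a1 Tw.
apply: (@extr_one C p z y (1 - a)) => //; try lra.
by have -> : (1 - a) *: z + (1 - (1 - a)) *: y - p = a *: y + (1 - a) *: z - p by vec.
Qed.

Definition lf (a : 'cV[R]_n) (y : V) : R := (y *m a) ord0 ord0.
Definition La (a : 'cV[R]_n) : R := \sum_(k < n) `|a k ord0|.

Lemma lfD a u v : lf a (u + v) = lf a u + lf a v.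
Proof. by rewrite /lf mulmxDl mxE. Qed.
Lemma lfZ a c u : lf a (c *: u) = c * lf a u.
Proof. by rewrite /lf -scalemxAl mxE. Qed.
Lemma lfN a u : lf a (- u) = - lf a u.
Proof. by rewrite -scaleN1r lfZ mulN1r. Qed.
Lemma lfB a u v : lf a (u - v) = lf a u - lf a v.
Proof. by rewrite lfD lfN. Qed.
Lemma lf_comb a t x y : lf a (t *: x + (1 - t) *: y) = t * lf a x + (1 - t) * lf a y.
Proof. by rewrite lfD !lfZ. Qed.

Lemma lf_sum a m (w : 'I_m -> R) (v : 'I_m -> V) :
  lf a (\sum_(i < m) w i *: v i) = \sum_(i < m) w i * lf a (v i).
Proof.
elim/big_rec2: _ => [|i x y _ <-]; first by rewrite /lf mul0mx mxE.
by rewrite lfD lfZ.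
Qed.

Lemma lf_aff a (F : set V) b x : (forall y, F y -> lf a y = b) -> aff F x -> lf a x = b.
Proof.
move=> hF [m [v [w [Fv [sw ->]]]]]; rewrite lf_sum.
rewrite (eq_bigr (fun i => w i * b)); last by move=> i _; rewrite hF.
by rewrite -mulr_suml sw mul1r.
Qed.

Lemma La_ge0 a : 0 <= La a.
Proof. by apply: sumr_ge0. Qed.

Lemma lf_lip a y : `|lf a y| <= La a * N1 y.
Proof.
rewrite /lf mxE /La /N1 mulr_sumr.
apply: le_trans (ler_norm_sum _ _ _) _; apply: ler_sum => k _.
rewrite normrM mulrC ler_wpM2r //.
by rewrite (bigD1 k) //= lerDl; apply: sumr_ge0.
Qed.

Lemma edist_le x (S : set V) y : S y -> edist x S <= enorm (x - y).
Proof.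
move=> Sy; apply: (@ge_inf _ [set enorm (x - y) | y in S]); last by exists y.
by exists 0 => _ [z _ <-]; exact: enorm_ge0.
Qed.

Lemma edist_approx x (S : set V) e : (exists y, S y) -> 0 < e ->
  exists2 y, S y & enorm (x - y) < edist x S + e.
Proof.
move=> [y0 Sy0] e0.
have hinf : has_inf [set enorm (x - y) | y in S].
  split; first by exists (enorm (x - y0)), y0.
  by exists 0 => _ [z _ <-]; exact: enorm_ge0.
have [_ [z Sz <-] h] := inf_adherent e0 hinf.
by exists z.
Qed.

Lemma edist_lb x (S : set V) c : (exists y, S y) ->
  (forall y, S y -> c <= enorm (x - y)) -> c <= edist x S.
Proof.
move=> [y0 Sy0] h; apply: lb_le_inf; first by exists (enorm (x - y0)), y0.
by move=> _ [y Sy <-]; exact: h.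
Qed.

End Faces.



Section Amen.
Variables (R : realType) (n : nat).
Notation V := 'rV[R]_n.

Lemma amen_pt (C F : set V) : amenable_face C F -> forall M, exists k, 0 < k /\
  forall x, aff F x -> enorm x <= M -> forall y, C y -> forall e, 0 < e ->
  exists2 z, F z & N1 (x - z) <= k * N1 (x - y) + e.
Proof.
move=> h M.
have [ka [ka0 hk]] := h [set x | enorm x <= M] (ex_intro _ M (fun x hx => hx)).
have n0 : 0 <= n%:R :> R by [].
exists ((n%:R + 1) * ka); split; first by rewrite mulr_gt0 // ltr_wpDl.
move=> x ax xM y Cy e e0.
have Fne := aff_nonempty ax.
have d1 : edist x F <= ka * edist x C := hk x ax xM.
have d2 : edist x C <= enorm (x - y) := edist_le x Cy.
have e1 : 0 < e / (n%:R + 1) by rewrite divr_gt0 // ltr_wpDl.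
have [z Fz hz] := edist_approx x Fne e1.
exists z => //.
have h1 := N1_le_enorm (x - z).
have h2 := enorm_le_N1 (x - y).
have h3 := enorm_ge0 (x - z).
have h4 : e / (n%:R + 1) * (n%:R + 1) = e by rewrite mulfVK // gt_eqF // ltr_wpDl.
move: (e / (n%:R + 1)) e1 hz h4 => e' e1 hz h4.
have h5 : ka * edist x C <= ka * N1 (x - y).
  by apply: ler_wpM2l; [exact: ltW | exact: le_trans d2 h2].
nra.
Qed.

Lemma pt_amen (C F : set V) : F `<=` C ->
  (forall M, exists k, 0 < k /\ forall x, aff F x -> enorm x <= M ->
     forall y, C y -> exists2 z, F z & N1 (x - z) <= k * N1 (x - y)) ->
  amenable_face C F.
Proof.
move=> FC h B [M hB]; have [k [k0 hk]] := h M.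
have n0 : 0 <= n%:R :> R by [].
have ka0 : 0 < k * (n%:R + 1) by rewrite mulr_gt0 // ltr_wpDl.
exists (k * (n%:R + 1)); split => // x ax Bx.
have [y0 Fy0] := aff_nonempty ax.
rewrite -ler_pdivrMl //.
apply: edist_lb; first by exists y0; exact: FC.
move=> y Cy; rewrite ler_pdivrMl //.
have [z Fz hz] := hk x ax (hB x Bx) y Cy.
have h1 := edist_le x Fz.
have h2 := enorm_le_N1 (x - z).
have h3 := N1_le_enorm (x - y).
have h4 := enorm_ge0 (x - y).
have h5 : k * N1 (x - y) <= k * (n%:R * enorm (x - y)) by apply: ler_wpM2l; [exact: ltW|].
nra.
Qed.

End Amen.



Section Move.
Variables (R : realType) (n : nat).
Notation V := 'rV[R]_n.

Lemma N1_eq0 (v : V) : N1 v = 0 -> v = 0.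
Proof.
move=> /eqP; rewrite psumr_eq0 // => /allP h; apply/rowP => i; rewrite mxE.
by apply/eqP; rewrite -normr_eq0; apply: h; rewrite mem_index_enum.
Qed.

Lemma N1_tri (x y z : V) : N1 (x - z) <= N1 (x - y) + N1 (y - z).
Proof. by rewrite (_ : x - z = (x - y) + (y - z)) ?N1D // addrA subrK. Qed.

Lemma fix_gt (G : set V) a b q g : convex_set_of G -> G q -> G g ->
  lf a q < b -> b < lf a g ->
  exists g', [/\ G g', lf a g' = b &
     N1 (g' - g) <= (lf a g - b) / (b - lf a q) * N1 (q - g)].
Proof.
move=> cG Gq Gg hq hg.
pose t := (lf a g - b) / ((lf a g - b) + (b - lf a q)).
have t0 : 0 <= t by rewrite divr_ge0 //; lra.
have t1 : t <= 1.
  by rewrite /t ler_pdivrMr ?mul1r; lra.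
exists (t *: q + (1 - t) *: g); split.
- exact: cG.
- rewrite lf_comb /t; field; lra.
- have -> : t *: q + (1 - t) *: g - g = t *: (q - g) by vec.
  rewrite N1Z ger0_norm // ler_wpM2r ?N1_ge0 // /t.
  apply: ler_wpM2l; first lra.
  by rewrite lef_pV2 ?posrE; lra.
Qed.


Lemma lfNa (a : 'cV[R]_n) (y : V) : lf (- a) y = - lf a y.
Proof. by rewrite /lf mulmxN mxE. Qed.

Lemma fix_lt (G : set V) a b q g : convex_set_of G -> G q -> G g ->
  b < lf a q -> lf a g < b ->
  exists g', [/\ G g', lf a g' = b &
     N1 (g' - g) <= (b - lf a g) / (lf a q - b) * N1 (q - g)].
Proof.
move=> cG Gq Gg hq hg.
have [||g' [Gg' e h]] := @fix_gt G (- a) (- b) q g cG Gq Gg; rewrite ?lfNa; try lra.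
exists g'; split => //; first by move: e; rewrite lfNa => /eqP; rewrite eqr_opp => /eqP.
by move: h; rewrite !lfNa opprK (addrC (- lf a g)) (addrC (- b)) opprK.
Qed.

Lemma arith (A B c1 d L s Qq Q' dl Nq : R) : 0 < s -> 0 <= c1 -> 0 <= L ->
  0 <= d -> d <= Q' -> 0 <= Qq -> A <= c1 * d -> 0 <= dl -> dl <= L * d ->
  Nq <= Qq + c1 * d -> B <= dl / s * Nq ->
  A + B <= (c1 + L * (Qq + c1 * Q') / s) * d.
Proof.
move=> s0 c10 L0 d0 dQ Qq0 hA dl0 hdl hN hB.
have u0 : 0 < s^-1 by rewrite invr_gt0.
move: hB; rewrite /= -[dl / s]/(dl * s^-1) => hB.
have -> : (c1 + L * (Qq + c1 * Q') / s) * d = c1 * d + (L * d * s^-1) * (Qq + c1 * Q').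
  by rewrite /=; field; rewrite gt_eqF.
move: (s^-1) u0 hB => u u0 hB.
have h1 : dl * u * Nq <= dl * u * (Qq + c1 * d) by apply: ler_wpM2l; [nra|].
have h2 : dl * u * (Qq + c1 * d) <= L * d * u * (Qq + c1 * d).
  apply: ler_wpM2r; first nra. by apply: ler_wpM2r; [lra|].
have h3 : L * d * u * (Qq + c1 * d) <= L * d * u * (Qq + c1 * Q').
  apply: ler_wpM2l; first nra. by apply: lerD => //; apply: ler_wpM2l.
lra.
Qed.

End Move.



Section Step.
Variables (R : realType) (n : nat).
Notation V := 'rV[R]_n.

Lemma N1_le_M (x : V) M : enorm x <= M -> N1 x <= n%:R * M.
Proof.
move=> h; apply: le_trans (N1_le_enorm x) _; apply: ler_wpM2l => //.
Qed.

Lemma N1_sub_le (x p : V) : N1 (x - p) <= N1 x + N1 p.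
Proof. by apply: le_trans (N1D _ _) _; rewrite N1N. Qed.

Lemma reduce (D F : set V) p M Q' : is_face D F -> F p ->
  n%:R * M + N1 p <= Q' ->
  (exists k, 0 < k /\ forall x, aff F x -> enorm x <= M -> forall y, D y ->
     0 < N1 (x - y) -> N1 (x - y) < Q' ->
     exists2 z, F z & N1 (x - z) <= k * N1 (x - y)) ->
  exists k, 0 < k /\ forall x, aff F x -> enorm x <= M -> forall y, D y ->
     exists2 z, F z & N1 (x - z) <= k * N1 (x - y).
Proof.
move=> fF Fp hQ [k [k0 hk]]; exists (k + 1); split; first by rewrite addr_gt0.
move=> x ax xM y Dy.
have d0 := N1_ge0 (x - y).
have [dp|] := ltrP 0 (N1 (x - y)); last first.
  move=> dle; have /N1_eq0 /eqP : N1 (x - y) = 0 by apply/eqP; rewrite eq_le dle d0.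
  rewrite subr_eq0 => /eqP exy; subst y.
  exists x; first exact: face_aff fF Dy ax.
  by rewrite subrr N10; apply: mulr_ge0 => //; apply: ltW; rewrite addr_gt0.
have [dQ|Qd] := ltrP (N1 (x - y)) Q'.
  have [z Fz hz] := hk x ax xM y Dy dp dQ; exists z => //.
  by apply: le_trans hz _; apply: ler_wpM2r => //; rewrite lerDl.
exists p => //.
have := N1_sub_le x p; have := N1_le_M xM.
have : 0 <= k * N1 (x - y) by apply: mulr_ge0 => //; exact: ltW.
lra.
Qed.


Lemma eq_le_hint (x y : R) : x = y -> x <= y.
Proof. by move=> ->. Qed.

Lemma comb_eq (al l1 l2 b : R) : 0 < al -> al < 1 -> b <= l1 -> b <= l2 ->
  al * l1 + (1 - al) * l2 = b -> l1 = b /\ l2 = b.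
Proof.
move=> a0 a1 h1 h2 e.
have h3 : al * (l1 - b) <= 0 by nra.
have h4 : l1 - b <= 0 by rewrite -(pmulr_rle0 _ a0).
have h5 : (1 - al) * (l2 - b) <= 0 by nra.
have h6 : l2 - b <= 0 by rewrite -(pmulr_rle0 (x := 1 - al)); lra.
split; apply/eqP; rewrite eq_le; apply/andP; split; lra.
Qed.

Lemma step_amen (C : set V) (a : 'cV[R]_n) (b : R) :
  closed C -> convex_set_of C -> amenable C ->
  amenable (C `&` [set y | lf a y <= b]).
Proof.
move=> clC cC amC; set D := (C `&` _); move=> F fF.
have [clF [cF [FD extF]]] := fF.
apply: pt_amen => // M.
have [Mneg|Mge0] := ltrP M 0.
  exists 1; split => // x _ xM; exfalso; have := enorm_ge0 x; lra.
case: (pselect (exists q, F q)) => [[q0 Fq0]|nF]; last first.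
  exists 1; split => // x ax; have [q Fq] := aff_nonempty ax.
  by case: nF; exists q.
have [p [Fp hp]] := ri_exists cF Fq0.
have Cp : C p by case: (FD _ Fp).
pose G := Gf C p.
have fG : is_face C G := Gf_face clC cC Cp.
have cG : convex_set_of G by case: fG => _ [].
have FC : F `<=` C by move=> u /FD [].
have FG : F `<=` G.
  by move=> z Fz; split; [exact: FC | exact: tdir_mono FC _ (hp z Fz)].
have [kG [kG0 hkG]] := amen_pt (amC G fG) M.
pose Q' := n%:R * M + N1 p.
apply: (@reduce _ F p M Q') => //.
pose c1 := kG + 1; pose L := La a.
have c10 : 0 <= c1 by rewrite addr_ge0 // ltW.
have L0 : 0 <= L := La_ge0 a.
have approx : forall x, aff F x -> enorm x <= M -> forall y, D y ->
    0 < N1 (x - y) -> exists2 g, G g & N1 (x - g) <= c1 * N1 (x - y).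
  move=> x ax xM y [Cy _] dp.
  have [g Gg hg] := hkG x (aff_mono FG ax) xM y Cy _ dp.
  by exists g => //; rewrite /c1 mulrDl mul1r.
have M0 : forall x : V, aff F x -> enorm x <= M -> 0 <= M.
  by move=> x _ xM; exact: le_trans (enorm_ge0 x) xM.
case: (pselect (exists2 p0, F p0 & lf a p0 < b)) => [[p0 Fp0 hp0]|nB].
- have claimB : forall z, G z -> lf a z <= b -> F z.
    move=> z [Cz Tz] hz.
    pose p' := 2^-1 *: p0 + (1 - 2^-1) *: p.
    have Fp' : F p' by apply: cF => //; lra.
    have hp' : lf a p' < b.
      have := (FD _ Fp).2; rewrite /= => hpb.
      rewrite /p' lf_comb; lra.
    have [s0 [sD sZ]] := tdir_subsp cC Cp.
    have T0 : tdir C p (p0 - p) by case: (FG _ Fp0).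
    have Tv : tdir C p (p' - z).
      have -> : p' - z = 2^-1 *: (p0 - p) + (-1) *: (z - p) by rewrite /p'; vec.
      by apply: sD; apply: sZ.
    have [e e0 he] := Tv.
    pose c := `|lf a p' - lf a z|.
    pose eps := Num.min (e / 2) ((b - lf a p') / (1 + c)).
    have c0 : 0 <= c := normr_ge0 _.
    have eps0 : 0 < eps.
      by rewrite lt_min; apply/andP; split; apply: divr_gt0; lra.
    have eps1 : eps <= e / 2 := ge_min_l _ _.
    have eps2 : eps <= (b - lf a p') / (1 + c) := ge_min_r _ _.
    apply: (face_push fF Fp' (conj Cz hz) eps0); split.
      have -> : p' + eps *: (p' - z) =
        2^-1 *: p0 + (1 - 2^-1) *: (p + (2 * eps) *: (p' - z)) by rewrite /p'; vec.
      apply: (cC); try lra; first by case: (FD _ Fp0).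
      by apply: he; rewrite ger0_norm; lra.
    rewrite /= lfD lfZ lfB.
    have : eps * (lf a p' - lf a z) <= eps * c.
      by apply: ler_wpM2l; [lra| exact: ler_norm].
    have : eps * (1 + c) <= b - lf a p' by rewrite -ler_pdivlMr //; lra.
    nra.
  pose s := b - lf a p0; pose Qq := N1 p0 + n%:R * M.
  have s0 : 0 < s by rewrite /s; lra.
  have Q'0 : 0 <= Q' by rewrite /Q' addr_ge0 ?N1_ge0 // mulr_ge0.
  have Qq0 : 0 <= Qq by rewrite /Qq addr_ge0 ?N1_ge0 // mulr_ge0.
  have X0 : 0 <= (L * (c1 + 1)) * (Qq + c1 * Q') / s.
    apply: divr_ge0; last exact: ltW.
    apply: mulr_ge0; first by apply: mulr_ge0 => //; lra.
    by apply: addr_ge0 => //; apply: mulr_ge0.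
  exists (c1 + (L * (c1 + 1)) * (Qq + c1 * Q') / s); split.
    by apply: lt_le_trans (_ : 0 < c1) _; [rewrite addr_gt0 | rewrite lerDl].
  move=> x ax xM y Dy dp dQ.
  have [g Gg hg] := approx x ax xM y Dy dp.
  have [hgb|hgb] := leP (lf a g) b.
    exists g; first exact: claimB.
    apply: le_trans hg _; apply: ler_wpM2r; first exact: N1_ge0.
    by rewrite lerDl.
  have [g' [Gg' eg' hg']] := fix_gt cG (FG _ Fp0) Gg hp0 hgb.
  exists g'; first by apply: claimB => //; rewrite eg'.
  apply: le_trans (N1_tri x g g') _; rewrite (N1B g g').
  apply: (arith (dl := lf a g - b) (Nq := N1 (p0 - g))) => //.
  + by apply: mulr_ge0 => //; lra.
  + exact: N1_ge0.
  + exact: ltW.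
  + lra.
  + have := (Dy.2); rewrite /= => hy.
    have h1 : lf a g - b <= `|lf a (g - y)| by rewrite lfB; apply: le_trans (ler_norm _); lra.
    have h2 := lf_lip a (g - y).
    have h3 := N1_tri g x y; rewrite (N1B g x) in h3.
    have h4 : L * N1 (g - y) <= L * (c1 * N1 (x - y) + N1 (x - y)).
      by apply: ler_wpM2l => //; lra.
    rewrite /L in h4 *; nra.
  + have h1 := N1_tri p0 x g.
    have h2 := N1_sub_le p0 x.
    have h3 := N1_le_M xM.
    rewrite /Qq; lra.
- have hFb : forall z, F z -> lf a z = b.
    move=> z Fz; have := (FD _ Fz).2; rewrite /= => h.
    apply/eqP; rewrite eq_le h /= leNgt; apply/negP => h'; apply: nB; by exists z.
  have claimA : forall z, G z -> lf a z = b -> F z.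
    move=> z [Cz Tz] hz; have [eps e0 Cw] := tdir_pt Tz.
    apply: (face_push fF Fp (conj Cz (eq_le_hint hz)) e0); split => //.
    by rewrite /= lfD lfZ lfB hz (hFb _ Fp) subrr mulr0 addr0.
  have hxb : forall x, aff F x -> lf a x = b := fun x ax => lf_aff hFb ax.
  case: (pselect ((exists2 qp, G qp & b < lf a qp) /\ (exists2 qm, G qm & lf a qm < b)))
    => [[[qp Gqp hqp] [qm Gqm hqm]]|nA1].
  + pose sp := lf a qp - b; pose sm := b - lf a qm.
    pose Qp := N1 qp + n%:R * M; pose Qm := N1 qm + n%:R * M.
    have sp0 : 0 < sp by rewrite /sp; lra.
    have sm0 : 0 < sm by rewrite /sm; lra.
    have Q'0 : 0 <= Q' by rewrite /Q' addr_ge0 ?N1_ge0 // mulr_ge0.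
    have Qp0 : 0 <= Qp by rewrite /Qp addr_ge0 ?N1_ge0 // mulr_ge0.
    have Qm0 : 0 <= Qm by rewrite /Qm addr_ge0 ?N1_ge0 // mulr_ge0.
    pose Xp := (L * (c1 + 1)) * (Qp + c1 * Q') / sp.
    pose Xm := (L * (c1 + 1)) * (Qm + c1 * Q') / sm.
    have Xp0 : 0 <= Xp.
      apply: divr_ge0; last exact: ltW.
      apply: mulr_ge0; first by apply: mulr_ge0 => //; lra.
      by apply: addr_ge0 => //; apply: mulr_ge0.
    have Xm0 : 0 <= Xm.
      apply: divr_ge0; last exact: ltW.
      apply: mulr_ge0; first by apply: mulr_ge0 => //; lra.
      by apply: addr_ge0 => //; apply: mulr_ge0.
    exists (c1 + Xp + Xm); split; first by rewrite /c1; lra.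
    move=> x ax xM y Dy dp dQ.
    have [g Gg hg] := approx x ax xM y Dy dp.
    have hxb' := hxb x ax.
    have hgx := lf_lip a (g - x); rewrite lfB hxb' -/L in hgx.
    have hL : L * N1 (g - x) <= L * (c1 * N1 (x - y)) by rewrite N1B; apply: ler_wpM2l.
    have hd0 := N1_ge0 (x - y).
    have hLd : L * (c1 * N1 (x - y)) <= L * (c1 + 1) * N1 (x - y).
      rewrite -mulrA; apply: ler_wpM2l => //; lra.
    have hN1 := N1_le_M xM.
    case: (ltgtP (lf a g) b) => hgb.
    * have [g' [Gg' eg' hg']] := fix_lt cG Gqp Gg hqp hgb.
      exists g'; first exact: claimA.
      apply: le_trans (N1_tri x g g') _; rewrite (N1B g g').
      apply: le_trans (_ : _ <= (c1 + Xp) * N1 (x - y)) _; last first.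
        by apply: ler_wpM2r => //; lra.
      apply: (arith (dl := b - lf a g) (Nq := N1 (qp - g))) => //.
      + by apply: mulr_ge0 => //; lra.
      + exact: ltW.
      + lra.
      + have h1 : b - lf a g <= `|lf a g - b| by rewrite distrC; exact: ler_norm.
        lra.
      + have h1 := N1_tri qp x g.
        have h2 := N1_sub_le qp x.
        rewrite /Qp; lra.
    * have [g' [Gg' eg' hg']] := fix_gt cG Gqm Gg hqm hgb.
      exists g'; first exact: claimA.
      apply: le_trans (N1_tri x g g') _; rewrite (N1B g g').
      apply: le_trans (_ : _ <= (c1 + Xm) * N1 (x - y)) _; last first.
        by apply: ler_wpM2r => //; lra.
      apply: (arith (dl := lf a g - b) (Nq := N1 (qm - g))) => //.
      + by apply: mulr_ge0 => //; lra.
      + exact: ltW.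
      + lra.
      + have h1 : lf a g - b <= `|lf a g - b| by exact: ler_norm.
        lra.
      + have h1 := N1_tri qm x g.
        have h2 := N1_sub_le qm x.
        rewrite /Qm; lra.
    * exists g; first exact: claimA.
      apply: le_trans hg _; apply: ler_wpM2r => //; lra.
  + have fFC : is_face C F.
      split => //; split => //; split => // y1 y2 al Cy1 Cy2 al0 al1 Fw.
      have Gw := FG _ Fw.
      have [_ [_ [_ extG]]] := fG.
      have [Gy1 Gy2] := extG _ _ _ Cy1 Cy2 al0 al1 Gw.
      have ew := hFb _ Fw; rewrite lf_comb in ew.
      have [h1 h2] : lf a y1 = b /\ lf a y2 = b.
        case: (pselect (exists2 qp, G qp & b < lf a qp)) => [hP|hP].
          have hM : forall q, G q -> b <= lf a q.
            move=> q Gq; rewrite leNgt; apply/negP => hq; apply: nA1; split => //.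
            by exists q.
          exact: comb_eq al0 al1 (hM _ Gy1) (hM _ Gy2) ew.
        have hM : forall q, G q -> lf a q <= b.
          move=> q Gq; rewrite leNgt; apply/negP => hq; apply: hP; by exists q.
        have := @comb_eq al (- lf a y1) (- lf a y2) (- b) al0 al1.
        rewrite !lerN2 => /(_ (hM _ Gy1) (hM _ Gy2)) [].
          by rewrite !mulrN -opprD ew.
        by move=> /eqP; rewrite eqr_opp => /eqP -> /eqP; rewrite eqr_opp => /eqP ->.
      by split; apply: claimA.
    have [kF [kF0 hkF]] := amen_pt (amC F fFC) M.
    exists (kF + 1); split; first by rewrite addr_gt0.
    move=> x ax xM y [Cy _] dp _.
    have [z Fz hz] := hkF x ax xM y Cy _ dp.
    by exists z => //; rewrite mulrDl mul1r.
Qed.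



End Step.


Section Final.
Variables (R : realType) (n : nat).
Notation V := 'rV[R]_n.

Lemma half_closed (a : 'cV[R]_n) b : closed [set y : V | lf a y <= b].
Proof.
have -> : [set y : V | lf a y <= b] =
  (fun v : V => \sum_(i < n) v ord0 i * a i ord0) @^-1` [set x | x <= b].
  by apply/seteqP; split => y /=; rewrite /lf mxE.
apply: preimage_closed; last exact: closed_le.
move=> x _; exact: lin_cont.
Qed.

Lemma half_pres (C : set V) a b : closed C -> convex_set_of C -> amenable C ->
  closed (C `&` [set y | lf a y <= b]) /\ convex_set_of (C `&` [set y | lf a y <= b])
  /\ amenable (C `&` [set y | lf a y <= b]).
Proof.
move=> clC cC aC; split; first by apply: closedI => //; exact: half_closed.
split; last exact: step_amen.
move=> x y t [Cx hx] [Cy hy] t0 t1; split; first exact: cC.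
move: hx hy; rewrite /= lf_comb => hx hy; nra.
Qed.

Lemma mxA_lf m (A : 'M[R]_(n, m)) (x : V) i : (x *m A) ord0 i = lf (col i A) x.
Proof. by rewrite /lf !mxE; apply: eq_bigr => k _; rewrite mxE. Qed.

Lemma poly_pres (K P : set V) : closed K -> convex_set_of K -> amenable K ->
  polyhedral P ->
  closed (K `&` P) /\ convex_set_of (K `&` P) /\ amenable (K `&` P).
Proof.
move=> clK cK aK [m [A [b ->]]].
pose Cj (j : nat) := K `&` [set x : V | forall i : 'I_m, (i < j)%N ->
   lf (col i A) x <= b ord0 i].
have h : forall j, closed (Cj j) /\ convex_set_of (Cj j) /\ amenable (Cj j).
  elim => [|j [clj [cj aj]]].
    have -> : Cj 0%N = K by apply/seteqP; split => [x []//|x Kx]; split.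
    by [].
  have [jm|mj] := ltnP j m; last first.
    have -> : Cj j.+1 = Cj j.
      apply/seteqP; split => x [Kx hx]; split => // i hi; apply: hx.
        exact: ltnW.
      exact: leq_trans (ltn_ord i) mj.
    by [].
  pose i0 := Ordinal jm.
  have -> : Cj j.+1 = Cj j `&` [set y | lf (col i0 A) y <= b ord0 i0].
    apply/seteqP; split => x.
      move=> [Kx hx]; split; [split => // i hi; apply: hx; exact: ltnW | exact: hx].
    move=> [[Kx hx] h0]; split => // i; rewrite ltnS leq_eqVlt => /orP [/eqP e|hi].
      by have -> : i = i0 by apply: val_inj.
    exact: hx.
  exact: half_pres.
have -> : K `&` [set x | forall i : 'I_m, (x *m A) ord0 i <= b ord0 i] = Cj m.
  apply/seteqP; split => x [Kx hx]; split => // i.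
    by move=> _; rewrite -mxA_lf.
  by rewrite mxA_lf; apply: hx.
exact: h.
Qed.

End Final.

Unset Implicit Arguments.
Set Strict Implicit.


Lemma coord_le_N1 (R : realType) n (z : 'rV[R]_n) i : `|z ord0 i| <= N1 z.
Proof. by rewrite /N1 (bigD1 i) //= lerDl; apply: sumr_ge0. Qed.

Theorem proposition4p1 (R : realType) (n : nat) (K P : set 'rV[R]_n) :
  closed_convex_cone K -> amenable K -> polyhedral P ->
  (closed (K `&` P) /\ convex_set_of (K `&` P) /\ amenable (K `&` P)) /\
  (pointed K ->
     exists C : set 'rV[R]_n,
       compact C /\ convex_set_of C /\ amenable C /\ K = cone_of C).
Proof.
move=> [clK [cK coK]] aK hP.
split; first exact: poly_pres.
move=> _.
pose box := [set x : 'rV[R]_n | forall i, `|x ord0 i| <= 1].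
have hbox : polyhedral box.
  exists (n + n)%N, (row_mx 1%:M (- 1%:M)), (const_mx 1).
  apply/seteqP; split => x /=.
    move=> h i; rewrite mul_mx_row mulmxN !mulmx1.
    case: (split_ordP i) => j ->; rewrite ?row_mxEl ?row_mxEr !mxE;
      have := h j; rewrite ler_norml => /andP [h1 h2]; lra.
  move=> h j; have h1 := h (lshift n j); have h2 := h (rshift n j).
  move: h1 h2; rewrite mul_mx_row mulmxN !mulmx1 row_mxEl row_mxEr !mxE => h1 h2.
  rewrite ler_norml; apply/andP; split; lra.
have [clC [cC aC]] := poly_pres clK cK aK hbox.
exists (K `&` box); split.
  have hc := @rV_compact R n (fun _ => `[(-1 : R), 1]%classic)
     (fun i => @segment_compact R (-1) 1).
  apply: (subclosed_compact clC hc).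
  move=> x [_ hx] i; rewrite /= in_itv /=; have := hx i; rewrite ler_norml.
  by [].
split => //; split => //.
apply/seteqP; split => z.
  move=> Kz; pose l := 1 + N1 z.
  have l0 : 0 < l by rewrite /l ltr_pwDl ?N1_ge0.
  exists (l^-1 *: z), l; split; [split|split].
  - by apply: coK => //; rewrite invr_ge0 ltW.
  - move=> i; rewrite mxE normrM (ger0_norm (x := l^-1)); last by rewrite invr_ge0 ltW.
    rewrite mulrC ler_pdivrMr // mul1r; apply: le_trans (@coord_le_N1 _ _ z i) _.
    by rewrite /l lerDr.
  - exact: ltW.
  - by rewrite scalerA divff ?gt_eqF // scale1r.
by move=> [x [l [[Kx _] [l0 ->]]]]; exact: coK.
Qed.
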